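(* Let $P$ be a point in $D$ with $P\neq O=(0,0)$. Let $u_1,u_2\in S^1$ be the intersections of the line $OP$ with $S^1$, with $|u_1P|<|u_2P|$. Then $\psi_P'(v)$ is monotonically increasing for $v\in arc[u_2,u_1)$ and monotonically decreasing for $v\in arc[u_1,u_2)$.
   Context: $D$ is the open unit disk in $\mathbb R^2$, $S^1$ its boundary circle identified with $\mathbb R/\mathbb Z$ via the counterclockwise normalized angle, $\pi:\mathbb R\to S^1$ the projection. For $P\in D$ and $v\in S^1$, $\psi_P(v)$ is the second intersection point of the line $vP$ with $S^1$. For a homeomorphism $g$ of $S^1$ with lift $\overline g$ ($\overline g(0)\in[0,1)$), $g'(x)=\overline g'(u)$ for $u\in\pi^{-1}(x)$. For $w_1,w_2\in S^1$, $arc[w_1,w_2)$ is the counterclockwise arc from $w_1$ to $w_2$ including $w_1$ and excluding $w_2$; monotonicity is along the arc traversed counterclockwise. $|XY|$ is Euclidean distance. *)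

(* Defs.v *)
From Stdlib Require Import Reals.
From Coquelicot Require Import Coquelicot.
Open Scope R_scope.

Definition pt := (R * R)%type.
Definition O : pt := (0, 0).

Definition edist (X Y : pt) : R :=
  sqrt ((fst X - fst Y) ^ 2 + (snd X - snd Y) ^ 2).

Definition in_D (X : pt) : Prop := fst X ^ 2 + snd X ^ 2 < 1.
Definition on_S1 (X : pt) : Prop := fst X ^ 2 + snd X ^ 2 = 1.

(* The point of S^1 with counterclockwise normalized angle t,
   i.e. the composite of pi : R -> R/Z with R/Z ~ S^1. *)
Definition e (t : R) : pt := (cos (2 * PI * t), sin (2 * PI * t)).

Definition collinear (A B C : pt) : Prop :=
  (fst B - fst A) * (snd C - snd A) - (snd B - snd A) * (fst C - fst A) = 0.

(* is_psi P v w : w = psi_P(v), the second intersection point of the line vP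
   with S^1 (for v on S^1 and P in D, the line vP is not tangent, so this is
   the unique point of S^1 on the line vP different from v). *)
Definition is_psi (P v w : pt) : Prop :=
  on_S1 w /\ collinear v P w /\ w <> v.

(* Main.v *)
Require Import Defs.
From Stdlib Require Import Reals Lra Psatz.
From Coquelicot Require Import Coquelicot.
Open Scope R_scope.

Lemma sq_pos_neq p q c s : (p,q) <> (c,s) -> 0 < (p-c)^2 + (q-s)^2.
Proof.
  intros H. destruct (Req_dec p c) as [->|Hp].
  - destruct (Req_dec q s) as [->|Hq]; [exfalso; apply H; reflexivity|].
    assert (0 < (q-s)^2) by (apply pow2_gt_0; intro; apply Hq; lra). ring_simplify; lra.
  - assert (0 < (p-c)^2) by (apply pow2_gt_0; intro; apply Hp; lra). pose proof (pow2_ge_0 (q-s)); lra.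
Qed.

Lemma alg_psi p q c s x y : c^2+s^2=1 -> p^2+q^2<1 -> x^2+y^2=1 ->
  (p-c)*(y-s)-(q-s)*(x-c)=0 -> (x,y)<>(c,s) ->
  x*(p^2+q^2+1-2*(p*c+q*s)) = -(1-(p^2+q^2))*c + 2*(1-(p*c+q*s))*p /\
  y*(p^2+q^2+1-2*(p*c+q*s)) = -(1-(p^2+q^2))*s + 2*(1-(p*c+q*s))*q.
Proof.
  intros Hu HP Hw Hcol Hne.
  assert (HPc : (p,q) <> (c,s)).
  { intros E; injection E; intros; subst; lra. }
  pose proof (sq_pos_neq _ _ _ _ HPc) as HB.
  set (B := (p-c)^2+(q-s)^2) in *.
  set (A := (x-c)*(p-c)+(y-s)*(q-s)).
  assert (h1 : (x-c)*B = A*(p-c)).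
  { assert ((x-c)*B - A*(p-c) = -(q-s)*((p-c)*(y-s)-(q-s)*(x-c))) by (unfold B, A; ring).
    rewrite Hcol in H. lra. }
  assert (h2 : (y-s)*B = A*(q-s)).
  { assert ((y-s)*B - A*(q-s) = (p-c)*((p-c)*(y-s)-(q-s)*(x-c))) by (unfold B, A; ring).
    rewrite Hcol in H. lra. }
  assert (hx : x*B = c*B + A*(p-c)) by lra.
  assert (hy : y*B = s*B + A*(q-s)) by lra.
  assert (E : (c*B + A*(p-c))^2 + (s*B + A*(q-s))^2 = B^2).
  { rewrite <- hx, <- hy. replace ((x*B)^2+(y*B)^2) with ((x^2+y^2)*B^2) by ring.
    rewrite Hw. ring. }
  assert (E2 : (c*B + A*(p-c))^2 + (s*B + A*(q-s))^2 - B^2 =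
     B^2*(c^2+s^2-1) + A*B*(2*(p*c+q*s-(c^2+s^2)) + A)) by (unfold B; ring).
  rewrite Hu in E2.
  assert (E3 : A*B*(2*(p*c+q*s-1) + A) = 0).
  { rewrite E in E2. replace (1-1) with 0 in E2 by ring. lra. }
  assert (HA : A <> 0).
  { intros HA0. rewrite HA0 in h1, h2.
    assert (x = c). { apply Rmult_eq_reg_r with B; lra. }
    assert (y = s). { apply Rmult_eq_reg_r with B; lra. }
    subst; apply Hne; reflexivity. }
  assert (HA2 : A = 2*(1-(p*c+q*s))).
  { assert (A*B <> 0) by (apply Rmult_integral_contrapositive; split; lra).
    destruct (Rmult_integral _ _ E3); [contradiction| lra]. }
  assert (HBe : B = p^2+q^2+1-2*(p*c+q*s)).
  { unfold B. nra. }
  rewrite <- HBe. rewrite hx, hy, HA2, HBe. split.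
  - nra.
  - nra.
Qed.

Definition mm p q t := p * cos (2*PI*t) + q * sin (2*PI*t).
Definition DD p q t := p^2+q^2+1 - 2 * mm p q t.
Definition kk p q := 1 - (p^2+q^2).
Definition N1 p q t := - kk p q * cos(2*PI*t) + 2*(1 - mm p q t)*p.
Definition N2 p q t := - kk p q * sin(2*PI*t) + 2*(1 - mm p q t)*q.

Lemma cs_unit t : cos t ^2 + sin t ^2 = 1.
Proof. pose proof (sin2_cos2 t). unfold Rsqr in *. nra. Qed.

Lemma DD_pos p q t : p^2+q^2<1 -> 0 < DD p q t.
Proof.
  intros HP. pose proof (cs_unit (2*PI*t)) as Hu.
  set (c := cos (2*PI*t)) in *. set (s := sin (2*PI*t)) in *.
  assert (HPc : (p,q) <> (c,s)). { intros E; injection E; intros; subst; lra. }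
  pose proof (sq_pos_neq _ _ _ _ HPc).
  unfold DD, mm. fold c s. nra.
Qed.

Lemma Sf_deriv p q C0 S0 t0 : p^2+q^2<1 ->
  C0 * DD p q t0 = N1 p q t0 -> S0 * DD p q t0 = N2 p q t0 ->
  is_derive (fun t => (N2 p q t * C0 - N1 p q t * S0) / DD p q t) t0
     (2*PI*kk p q / DD p q t0).
Proof.
  intros HP HC HS. pose proof (DD_pos p q t0 HP) as HD.
  set (c := cos (2*PI*t0)). set (s := sin (2*PI*t0)).
  set (m' := 2*PI*(-p*s+q*c)).
  set (E := ((((-2*PI*kk p q*c - 2*q*m') * C0 - (2*PI*kk p q*s - 2*p*m')*S0) * DD p q t0
            - (N2 p q t0 * C0 - N1 p q t0 * S0) * (-2*m'))/ (DD p q t0)^2)).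
  assert (Hd : is_derive (fun t => (N2 p q t * C0 - N1 p q t * S0) / DD p q t) t0 E).
  { unfold N1, N2, DD, mm in *. auto_derive.
    - lra.
    - unfold E, m', c, s. field. lra. }
  replace (2*PI*kk p q / DD p q t0) with E; [exact Hd|].
  pose proof (cs_unit (2*PI*t0)) as Hu. fold c s in Hu.
  assert (HDv : DD p q t0 = p^2+q^2+1-2*(p*c+q*s)) by reflexivity.
  assert (HN1 : N1 p q t0 = -kk p q * c + 2*(1-(p*c+q*s))*p) by reflexivity.
  assert (HN2 : N2 p q t0 = -kk p q * s + 2*(1-(p*c+q*s))*q) by reflexivity.
  assert (HC' : C0 = N1 p q t0 / DD p q t0) by (rewrite <- HC; field; lra).
  assert (HS' : S0 = N2 p q t0 / DD p q t0) by (rewrite <- HS; field; lra).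
  unfold E. rewrite HC', HS'.
  assert (Hx : (-2*PI*kk p q*c - 2*q*m') * N1 p q t0 - (2*PI*kk p q*s - 2*p*m') * N2 p q t0
     = 2*PI*kk p q * (kk p q*(c^2+s^2) + 2*(p^2+q^2)*(c^2+s^2) - 2*(p*c+q*s))).
  { rewrite HN1, HN2. unfold m'. ring. }
  rewrite Hu in Hx.
  assert (Hx2 : (-2*PI*kk p q*c - 2*q*m') * N1 p q t0 - (2*PI*kk p q*s - 2*p*m') * N2 p q t0
     = 2*PI*kk p q * DD p q t0).
  { rewrite Hx, HDv. unfold kk. ring. }
  transitivity (((-2*PI*kk p q*c - 2*q*m') * N1 p q t0 - (2*PI*kk p q*s - 2*p*m') * N2 p q t0) / (DD p q t0)^2).
  { field. lra. }
  rewrite Hx2. field. lra.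
Qed.

Lemma asin_deriv0 : is_derive asin 0 1.
Proof.
  assert (H : -1 < 0 < 1) by lra.
  apply is_derive_Reals.
  apply (proj1 (derive_pt_eq asin 0 1 (derivable_pt_asin 0 H))).
  rewrite derive_pt_asin. rewrite Rsqr_0, Rminus_0_r, sqrt_1. field.
Qed.

Lemma g_deriv p q (g : R -> R) t0 : p^2+q^2<1 -> continuous g t0 ->
  (forall t, cos(2*PI*g t) * DD p q t = N1 p q t /\ sin(2*PI*g t) * DD p q t = N2 p q t) ->
  is_derive g t0 (kk p q / DD p q t0).
Proof.
  intros HP Hcont Hrel.
  set (C0 := cos (2*PI*g t0)). set (S0 := sin (2*PI*g t0)).
  destruct (Hrel t0) as [HC HS]. fold C0 in HC. fold S0 in HS.
  pose proof (DD_pos p q t0 HP) as HD.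
  set (Sf := fun t => (N2 p q t * C0 - N1 p q t * S0) / DD p q t).
  assert (HSf0 : Sf t0 = 0).
  { unfold Sf. rewrite <- HC, <- HS. field. lra. }
  assert (Hloc : locally t0 (fun t => g t0 + / (2*PI) * asin (Sf t) = g t)).
  { assert (H4 : 0 < 1/4) by lra.
    pose proof (proj1 (filterlim_locally g (g t0)) Hcont (mkposreal _ H4)) as Hc.
    apply filter_imp with (2 := Hc). intros t Ht.
    unfold ball in Ht; simpl in Ht; unfold AbsRing_ball, abs, minus, plus, opp in Ht; simpl in Ht.
    apply Rabs_def2 in Ht.
    destruct (Hrel t) as [H1 H2].
    pose proof (DD_pos p q t HP) as HDt.
    assert (HSt : Sf t = sin (2*PI*g t - 2*PI*g t0)).
    { unfold Sf. rewrite <- H1, <- H2, sin_minus. fold C0 S0. field. lra. }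
    rewrite HSt. rewrite asin_sin.
    - field. pose proof PI_RGT_0. lra.
    - pose proof PI_RGT_0. split; nra. }
  apply (is_derive_ext_loc _ _ _ _ Hloc).
  pose proof (Sf_deriv p q C0 S0 t0 HP HC HS) as HSd. fold Sf in HSd.
  assert (Ha : is_derive asin (Sf t0) 1) by (rewrite HSf0; exact asin_deriv0).
  pose proof (is_derive_comp _ _ _ _ _ Ha HSd) as H1.
  pose proof (is_derive_plus _ _ t0 _ _ (is_derive_const (g t0) t0) (is_derive_scal _ t0 (/(2*PI)) _ H1)) as H2.
  assert (Hv : plus zero (/(2*PI) * scal (2*PI*kk p q / DD p q t0) 1) = kk p q / DD p q t0).
  { rewrite plus_zero_l. unfold scal; simpl. unfold mult; simpl. field. pose proof PI_RGT_0. lra. }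
  rewrite <- Hv. exact H2.
Qed.

Lemma half_turn a b : a < b -> b <= a + 1 -> cos (2*PI*a) = - cos (2*PI*b) ->
  sin (2*PI*a) = - sin (2*PI*b) -> 2*PI*b - 2*PI*a = PI.
Proof.
  intros H1 H2 Hc Hs. pose proof PI_RGT_0 as HPI.
  assert (Hd : cos (2*PI*b - 2*PI*a) = -1).
  { rewrite cos_minus, Hc, Hs. pose proof (cs_unit (2*PI*b)). nra. }
  set (d := 2*PI*b - 2*PI*a) in *.
  assert (0 < d) by (unfold d; nra).
  assert (d <= 2*PI) by (unfold d; nra).
  destruct (Rtotal_order d PI) as [Hlt|[Heq|Hgt]]; auto.
  - pose proof (cos_decreasing_1 d PI ltac:(lra) ltac:(lra) ltac:(lra) ltac:(lra) Hlt).
    rewrite cos_PI in H3. lra.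
  - pose proof (cos_increasing_1 PI d ltac:(lra) ltac:(lra) ltac:(lra) ltac:(lra) Hgt).
    rewrite cos_PI in H3. lra.
Qed.

Lemma cos_dec_le x y : 0 <= x -> x <= y -> y <= PI -> cos y <= cos x.
Proof.
  intros. destruct (Req_dec x y) as [->|Hne]; [lra|].
  left. apply cos_decreasing_1; lra.
Qed.

Lemma mm_cos p q c0 x1 y1 a t : p = c0 * x1 -> q = c0 * y1 ->
  cos (2*PI*a) = x1 -> sin (2*PI*a) = y1 ->
  mm p q t = c0 * cos (2*PI*t - 2*PI*a).
Proof.
  intros -> -> <- <-. unfold mm. rewrite cos_minus. ring.
Qed.

Theorem lemma2p3 (P u1 u2 : pt) (g : R -> R) :
  in_D P -> P <> O ->
  on_S1 u1 -> on_S1 u2 -> collinear O P u1 -> collinear O P u2 -> u1 <> u2 ->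
  edist u1 P < edist u2 P ->
  (forall t, continuous g t) -> 0 <= g 0 -> g 0 < 1 ->
  (forall t, is_psi P (e t) (e (g t))) ->
  (forall t, ex_derive g t) /\
  (forall a1 a2, e a1 = u1 -> e a2 = u2 -> a2 < a1 -> a1 <= a2 + 1 ->
     forall s t, a2 <= s -> s <= t -> t < a1 -> Rabs (Derive g s) <= Rabs (Derive g t)) /\
  (forall b1 b2, e b1 = u1 -> e b2 = u2 -> b1 < b2 -> b2 <= b1 + 1 ->
     forall s t, b1 <= s -> s <= t -> t < b2 -> Rabs (Derive g t) <= Rabs (Derive g s)).
Proof.
  intros HD HPO Hu1 Hu2 Hc1 Hc2 Hne Hdist Hcont _ _ Hpsi.
  destruct P as [p q], u1 as [x1 y1], u2 as [x2 y2].
  unfold in_D, on_S1, collinear, edist, O in *; simpl in *.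
  assert (Hrel : forall t, cos(2*PI*g t) * DD p q t = N1 p q t /\ sin(2*PI*g t) * DD p q t = N2 p q t).
  { intro t. destruct (Hpsi t) as [Hw [Hcol Hn]].
    unfold e, on_S1, collinear in *; simpl in *.
    exact (alg_psi p q _ _ _ _ (cs_unit _) HD Hw Hcol Hn). }
  assert (Hder : forall t, is_derive g t (kk p q / DD p q t)).
  { intro t. apply g_deriv; auto. }
  assert (HDer : forall t, Derive g t = kk p q / DD p q t).
  { intro t. apply is_derive_unique. apply Hder. }
  assert (Hk : 0 < kk p q) by (unfold kk; lra).
  assert (Habs : forall t, Rabs (Derive g t) = kk p q / DD p q t).
  { intro t. rewrite HDer. apply Rabs_pos_eq. pose proof (DD_pos p q t HD).
    unfold Rdiv. apply Rmult_le_pos; [lra|]. left; apply Rinv_0_lt_compat; lra. }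
  assert (Hmono : forall s t, mm p q s <= mm p q t -> kk p q / DD p q s <= kk p q / DD p q t).
  { intros s t Hm. pose proof (DD_pos p q t HD). unfold Rdiv. apply Rmult_le_compat_l; [lra|].
    apply Rinv_le_contravar; [lra|]. unfold DD. lra. }
  assert (Hu1' : x1^2+y1^2=1) by (simpl; lra).
  assert (Hu2' : x2^2+y2^2=1) by (simpl; lra).
  set (c0 := p*x1+q*y1).
  assert (Hc1' : p*y1 = q*x1) by lra.
  assert (Hp : p = c0 * x1).
  { assert (p - c0*x1 = p*(1 - (x1^2+y1^2)) + y1*(p*y1 - q*x1)) by (unfold c0; ring).
    rewrite Hu1', Hc1' in H. lra. }
  assert (Hq : q = c0 * y1).
  { assert (q - c0*y1 = q*(1 - (x1^2+y1^2)) - x1*(p*y1 - q*x1)) by (unfold c0; ring).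
    rewrite Hu1', Hc1' in H. lra. }
  assert (Hc0 : c0 <> 0).
  { intro Z. apply HPO. rewrite Hp, Hq, Z. f_equal; ring. }
  assert (Hx12 : x1 * y2 = y1 * x2).
  { apply Rmult_eq_reg_l with c0; [|exact Hc0]. 
    replace (c0*(x1*y2)) with (p*y2) by (rewrite Hp; ring).
    replace (c0*(y1*x2)) with (q*x2) by (rewrite Hq; ring). lra. }
  set (d := x1*x2+y1*y2).
  assert (Hx2 : x2 = d * x1).
  { assert (x2 - d*x1 = x2*(1 - (x1^2+y1^2)) - y1*(x1*y2 - y1*x2)) by (unfold d; ring).
    rewrite Hu1', Hx12 in H. lra. }
  assert (Hy2 : y2 = d * y1).
  { assert (y2 - d*y1 = y2*(1 - (x1^2+y1^2)) + x1*(x1*y2 - y1*x2)) by (unfold d; ring).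
    rewrite Hu1', Hx12 in H. lra. }
  assert (Hd2 : d = -1).
  { assert (d^2 = 1) by (rewrite Hx2, Hy2 in Hu2'; nra).
    assert (d <> 1). { intro E1. apply Hne. rewrite Hx2, Hy2, E1. f_equal; ring. }
    nra. }
  rewrite Hd2 in Hx2, Hy2.
  apply sqrt_lt_0_alt in Hdist.
  assert (Hc0p : 0 < c0).
  { unfold c0. rewrite Hx2, Hy2 in Hdist. nra. }
  pose proof PI_RGT_0 as HPI.
  split; [intro t; exists (kk p q / DD p q t); apply Hder|].
  split.
  - intros a1 a2 Ha1 Ha2 H12 H12' s t Hs Hst Ht.
    injection Ha1; intros Sa1 Ca1. injection Ha2; intros Sa2 Ca2.
    assert (Hh : 2*PI*a1 - 2*PI*a2 = PI).
    { apply half_turn; auto; [rewrite Ca1, Ca2, Hx2 | rewrite Sa1, Sa2, Hy2]; ring. }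
    rewrite !Habs. apply Hmono.
    rewrite (mm_cos p q c0 x1 y1 a1 s Hp Hq Ca1 Sa1), (mm_cos p q c0 x1 y1 a1 t Hp Hq Ca1 Sa1).
    apply Rmult_le_compat_l; [lra|].
    rewrite <- (cos_neg (2*PI*s - 2*PI*a1)), <- (cos_neg (2*PI*t - 2*PI*a1)).
    apply cos_dec_le; nra.
  - intros b1 b2 Hb1 Hb2 H12 H12' s t Hs Hst Ht.
    injection Hb1; intros Sb1 Cb1. injection Hb2; intros Sb2 Cb2.
    assert (Hh : 2*PI*b2 - 2*PI*b1 = PI).
    { apply half_turn; auto; [rewrite Cb1, Cb2, Hx2 | rewrite Sb1, Sb2, Hy2]; ring. }
    rewrite !Habs. apply Hmono.
    rewrite (mm_cos p q c0 x1 y1 b1 s Hp Hq Cb1 Sb1), (mm_cos p q c0 x1 y1 b1 t Hp Hq Cb1 Sb1).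
    apply Rmult_le_compat_l; [lra|].
    apply cos_dec_le; nra.
Qed.
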